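(* Let $a\in\mathbb F^*$, let $g,h\in\mathcal R$ satisfy $x^n-a=hg$, and let $f\in\mathcal R$. Then $$M^\theta_a(\overline{fg})=M^\theta_c(\overline f)\,M^\theta_a(\overline g),\qquad\text{where } c=\gamma(a,g).$$
   Context: $\mathbb F$ is a finite field, $\theta\in\mathrm{Aut}(\mathbb F)$, and $\mathcal R=\mathbb F[x;\theta]$ is the skew polynomial ring: elements $\sum_i f_ix^i$ with $f_i\in\mathbb F$ on the left, usual addition, multiplication determined by $xb=\theta(b)x$ for $b\in\mathbb F$. Fix $n\in\mathbb N$. For $b\in\mathbb F^*$, $\mathcal S_b=\mathcal R/\mathcal R(x^n-b)$ (a left $\mathcal R$-module); $\overline f$ denotes the coset of $f$, and in $M^\theta_b(\overline f)$ the coset is taken in $\mathcal S_b$. Let $\mathfrak v_b:\mathcal S_b\to\mathbb F^n$ be the inverse of the isomorphism $(c_0,\dots,c_{n-1})\mapsto\overline{\sum_{i=0}^{n-1}c_ix^i}$. The $(\theta,b)$-circulant $M^\theta_b(\overline f)$ is the $n\times n$ matrix whose row with index $i$ ($i=0,\dots,n-1$) is $\mathfrak v_b(\overline{x^if})$. For a right divisor $g=\sum g_ix^i$ of $x^n-a$ (so $g_0\ne0$), $\gamma(a,g)=a\,g_0^{-1}\theta^n(g_0)$. *)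

(* Defs.v *)
From HB Require Import structures.
From mathcomp Require Import all_boot all_order all_algebra all_field.
From Stdlib Require Import ClassicalEpsilon.
Set Implicit Arguments. Unset Strict Implicit. Unset Printing Implicit Defensive.
Import GRing.Theory.
Local Open Scope ring_scope.

(* Elements of R = F[x;theta] are stored as their coefficient lists
   sum_i f_i x^i (coefficients on the left), using the type {poly F} only
   as a container; the ring product of R is [skmul] below, NOT the
   commutative product of {poly F}. *)

(* (sum_i f_i x^i)(sum_j g_j x^j) = sum_k (sum_{i+j=k} f_i theta^i(g_j)) x^k,
   which is the product determined by x b = theta(b) x. *)
Definition skmul (F : finFieldType) (theta : {rmorphism F -> F})
  (f g : {poly F}) : {poly F} :=
  \poly_(k < (size f + size g).-1)
     \sum_(i < k.+1) f`_i * iter i theta (g`_(k - i)).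

Definition rowpoly (F : finFieldType) (n : nat) (c : 'rV[F]_n) : {poly F} :=
  \sum_(j < n) c 0 j *: 'X^j.

(* v_b : S_b -> F^n, the inverse of c |-> coset of sum c_i x^i, applied to
   the coset of f in S_b = R / R(x^n - b): the (unique) c such that
   f - sum c_j x^j lies in the left ideal R (x^n - b). *)
Definition vrep (F : finFieldType) (theta : {rmorphism F -> F}) (n : nat)
  (b : F) (f : {poly F}) : 'rV[F]_n :=
  ClassicalEpsilon.epsilon (inhabits 0)
    (fun c : 'rV[F]_n =>
       exists q : {poly F}, f = skmul theta q ('X^n - b%:P) + rowpoly c).

Definition circ (F : finFieldType) (theta : {rmorphism F -> F}) (n : nat)
  (b : F) (f : {poly F}) : 'M[F]_n :=
  \matrix_(i < n, j < n) vrep theta n b (skmul theta 'X^i f) 0 j.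

Definition gamma (F : finFieldType) (theta : {rmorphism F -> F}) (n : nat)
  (a : F) (g : {poly F}) : F :=
  a * (g`_0)^-1 * iter n theta (g`_0).

(* Main.v *)
Require Import Defs.
From HB Require Import structures.
From mathcomp Require Import all_boot all_order all_algebra all_field.
From Stdlib Require Import ClassicalEpsilon Lia.
From mathcomp Require Import zify.
Set Implicit Arguments. Unset Strict Implicit. Unset Printing Implicit Defensive.
Import GRing.Theory.
Local Open Scope ring_scope.

Lemma iter0r (F : finFieldType) (theta : {rmorphism F -> F}) i :
  iter i theta 0 = 0.
Proof. by elim: i => //= i ->; rewrite rmorph0. Qed.
Lemma iter1r (F : finFieldType) (theta : {rmorphism F -> F}) i :
  iter i theta 1 = 1.
Proof. by elim: i => //= i ->; rewrite rmorph1. Qed.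
Lemma iterDr (F : finFieldType) (theta : {rmorphism F -> F}) i x y :
  iter i theta (x + y) = iter i theta x + iter i theta y.
Proof. by elim: i => //= i ->; rewrite rmorphD. Qed.
Lemma iterNr (F : finFieldType) (theta : {rmorphism F -> F}) i x :
  iter i theta (- x) = - iter i theta x.
Proof. by elim: i => //= i ->; rewrite rmorphN. Qed.
Lemma iterMr (F : finFieldType) (theta : {rmorphism F -> F}) i x y :
  iter i theta (x * y) = iter i theta x * iter i theta y.
Proof. by elim: i => //= i ->; rewrite rmorphM. Qed.
Lemma iter_eq0 (F : finFieldType) (theta : {rmorphism F -> F}) i x :
  (iter i theta x == 0) = (x == 0).
Proof. by elim: i => //= i <-; rewrite fmorph_eq0. Qed.

Lemma coef_skmul (F : finFieldType) (theta : {rmorphism F -> F}) f g k :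
  (skmul theta f g)`_k = \sum_(i < k.+1) f`_i * iter i theta (g`_(k - i)).
Proof.
rewrite /skmul coef_poly; case: ifP => // /negbT; rewrite -leqNgt => hk.
rewrite big1 // => i _.
case: (ltnP i (size f)) => hi; last by rewrite nth_default // mul0r.
rewrite (nth_default 0 (_ : size g <= k - i)%N) ?iter0r ?mulr0 //.
move: hk hi; case: (size f) => // sf; case: (size g) => //=; lia.
Qed.

Lemma skmulDl (F : finFieldType) (theta : {rmorphism F -> F}) f1 f2 g :
  skmul theta (f1 + f2) g = skmul theta f1 g + skmul theta f2 g.
Proof.
apply/polyP => k; rewrite coefD !coef_skmul -big_split /=.
by apply: eq_bigr => i _; rewrite coefD mulrDl.
Qed.
Lemma skmulNl (F : finFieldType) (theta : {rmorphism F -> F}) f g :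
  skmul theta (- f) g = - skmul theta f g.
Proof.
apply/polyP => k; rewrite coefN !coef_skmul -sumrN.
by apply: eq_bigr => i _; rewrite coefN mulNr.
Qed.
Lemma skmul0l (F : finFieldType) (theta : {rmorphism F -> F}) g :
  skmul theta 0 g = 0.
Proof. by apply/polyP => k; rewrite coef_skmul coef0 big1 // => i _; rewrite coef0 mul0r. Qed.
Lemma skmulBl (F : finFieldType) (theta : {rmorphism F -> F}) f1 f2 g :
  skmul theta (f1 - f2) g = skmul theta f1 g - skmul theta f2 g.
Proof. by rewrite skmulDl skmulNl. Qed.
Lemma skmulZl (F : finFieldType) (theta : {rmorphism F -> F}) d f g :
  skmul theta (d *: f) g = d *: skmul theta f g.
Proof.
apply/polyP => k; rewrite coefZ !coef_skmul mulr_sumr.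
by apply: eq_bigr => i _; rewrite coefZ mulrA.
Qed.
Lemma skmulDr (F : finFieldType) (theta : {rmorphism F -> F}) f g1 g2 :
  skmul theta f (g1 + g2) = skmul theta f g1 + skmul theta f g2.
Proof.
apply/polyP => k; rewrite coefD !coef_skmul -big_split /=.
by apply: eq_bigr => i _; rewrite coefD iterDr mulrDr.
Qed.
Lemma skmulNr (F : finFieldType) (theta : {rmorphism F -> F}) f g :
  skmul theta f (- g) = - skmul theta f g.
Proof.
apply/polyP => k; rewrite coefN !coef_skmul -sumrN.
by apply: eq_bigr => i _; rewrite coefN iterNr mulrN.
Qed.
Lemma skmul0r (F : finFieldType) (theta : {rmorphism F -> F}) g :
  skmul theta g 0 = 0.
Proof. by apply/polyP => k; rewrite coef_skmul coef0 big1 // => i _; rewrite coef0 iter0r mulr0. Qed.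
Lemma skmulBr (F : finFieldType) (theta : {rmorphism F -> F}) f g1 g2 :
  skmul theta f (g1 - g2) = skmul theta f g1 - skmul theta f g2.
Proof. by rewrite skmulDr skmulNr. Qed.

Lemma skmul_suml (F : finFieldType) (theta : {rmorphism F -> F}) (I : Type)
  (r : seq I) (P : pred I) (E : I -> {poly F}) g :
  skmul theta (\sum_(i <- r | P i) E i) g = \sum_(i <- r | P i) skmul theta (E i) g.
Proof. by apply: (big_morph (fun f => skmul theta f g)) => [x y|]; rewrite ?skmulDl ?skmul0l. Qed.
Lemma skmul_sumr (F : finFieldType) (theta : {rmorphism F -> F}) (I : Type)
  (r : seq I) (P : pred I) (E : I -> {poly F}) g :
  skmul theta g (\sum_(i <- r | P i) E i) = \sum_(i <- r | P i) skmul theta g (E i).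
Proof. by apply: (big_morph (fun f => skmul theta g f)) => [x y|]; rewrite ?skmulDr ?skmul0r. Qed.

Lemma skmul_mono (F : finFieldType) (theta : {rmorphism F -> F}) a b i j :
  skmul theta (a *: 'X^i) (b *: 'X^j) = (a * iter i theta b) *: 'X^(i + j).
Proof.
apply/polyP => k; rewrite coef_skmul coefZ coefXn.
have [hk|hk] := eqVneq k (i + j)%N.
  have hi : (i < k.+1)%N by rewrite hk; lia.
  rewrite (bigD1 (Ordinal hi)) //= big1 => [|p hp].
    by rewrite !coefZ !coefXn eqxx hk addKn eqxx !mulr1 addr0.
  rewrite !coefZ !coefXn; case: eqP => [hpi|]; last by rewrite mulr0 mul0r.
  by move: hp; rewrite -val_eqE /= hpi eqxx.
rewrite mulr0 big1 // => p _; rewrite !coefZ !coefXn.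
case: eqP => [hpi|]; last by rewrite mulr0 mul0r.
case: eqP => [hj|]; last by rewrite mulr0 iter0r mulr0.
by move: hk; rewrite -hj -hpi subnKC ?eqxx //; have := ltn_ord p; lia.
Qed.

Lemma poly_expand (F : finFieldType) (f : {poly F}) :
  f = \sum_(i < size f) f`_i *: 'X^i.
Proof. by rewrite -poly_def coefK. Qed.

Lemma skmul_sumlo (F : finFieldType) (theta : {rmorphism F -> F}) n
  (E : 'I_n -> {poly F}) g :
  skmul theta (\sum_(i < n) E i) g = \sum_(i < n) skmul theta (E i) g.
Proof. exact: skmul_suml. Qed.
Lemma skmul_sumro (F : finFieldType) (theta : {rmorphism F -> F}) n
  (E : 'I_n -> {poly F}) g :
  skmul theta g (\sum_(i < n) E i) = \sum_(i < n) skmul theta g (E i).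
Proof. exact: skmul_sumr. Qed.

Lemma skmulA2 (F : finFieldType) (theta : {rmorphism F -> F}) a i b j h :
  skmul theta (skmul theta (a *: 'X^i) (b *: 'X^j)) h
  = skmul theta (a *: 'X^i) (skmul theta (b *: 'X^j) h).
Proof.
rewrite [h]poly_expand skmul_mono skmul_sumro [in RHS]skmul_sumro skmul_sumro.
apply: eq_bigr => l _.
by rewrite !skmul_mono iterMr -iterD mulrA addnA.
Qed.

Lemma skmulA1 (F : finFieldType) (theta : {rmorphism F -> F}) a i g h :
  skmul theta (skmul theta (a *: 'X^i) g) h
  = skmul theta (a *: 'X^i) (skmul theta g h).
Proof.
rewrite [g]poly_expand skmul_sumro skmul_sumlo skmul_sumlo skmul_sumro.
by apply: eq_bigr => j _; rewrite skmulA2.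
Qed.

Lemma skmulA (F : finFieldType) (theta : {rmorphism F -> F}) f g h :
  skmul theta (skmul theta f g) h = skmul theta f (skmul theta g h).
Proof.
rewrite [f]poly_expand skmul_sumlo skmul_sumlo skmul_sumlo.
by apply: eq_bigr => j _; rewrite skmulA1.
Qed.

Lemma gt_size (F : finFieldType) (p : {poly F}) i : p`_i != 0 -> (i < size p)%N.
Proof. by rewrite ltnNge; apply: contra => h; rewrite nth_default. Qed.

Lemma poly_expand_le (F : finFieldType) (f : {poly F}) N :
  (size f <= N)%N -> f = \sum_(i < N) f`_i *: 'X^i.
Proof.
move=> hN; rewrite -poly_def; apply/polyP => k; rewrite coef_poly.
by case: ltnP => // hk; rewrite nth_default //; apply: leq_trans hk.
Qed.

Lemma skmulCl (F : finFieldType) (theta : {rmorphism F -> F}) c g :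
  skmul theta c%:P g = c *: g.
Proof.
apply/polyP => k; rewrite coef_skmul coefZ big_ord_recl /= coefC eqxx subn0.
by rewrite big1 ?addr0 // => i _; rewrite coefC /= mul0r.
Qed.

Lemma skmulCr_coef (F : finFieldType) (theta : {rmorphism F -> F}) c g k :
  (skmul theta g c%:P)`_k = g`_k * iter k theta c.
Proof.
rewrite coef_skmul big_ord_recr /= subnn coefC eqxx big1 ?add0r // => i _.
rewrite coefC; case: eqP => [h|]; last by rewrite iter0r mulr0.
by have := ltn_ord i; lia.
Qed.

Lemma skmul_coef0 (F : finFieldType) (theta : {rmorphism F -> F}) f g :
  (skmul theta f g)`_0 = f`_0 * g`_0.
Proof. by rewrite coef_skmul big_ord1. Qed.

Lemma size_skmul (F : finFieldType) (theta : {rmorphism F -> F}) f g :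
  f != 0 -> g != 0 -> size (skmul theta f g) = (size f + size g).-1.
Proof.
move=> f0 g0; apply/eqP; rewrite eqn_leq size_poly /=.
have sf : (0 < size f)%N by rewrite size_poly_gt0.
have sg : (0 < size g)%N by rewrite size_poly_gt0.
move hk: ((size f + size g).-2) => k.
have -> : (size f + size g).-1 = k.+1 by lia.
apply: gt_size; rewrite coef_skmul.
have hi : ((size f).-1 < k.+1)%N by lia.
rewrite (bigD1 (Ordinal hi)) //= big1 ?addr0.
  have -> : (k - (size f).-1 = (size g).-1)%N by lia.
  rewrite mulf_neq0 // ?iter_eq0 -lead_coefE lead_coef_eq0 //.
move=> i hi'; have {hi'} : val i != (size f).-1 by move: hi'; rewrite -val_eqE.
case: (ltnP (size f).-1 i) => h1 h2.
  by rewrite nth_default ?mul0r //; apply: leq_trans (leqSpred _) h1.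
have h3 : (i < (size f).-1)%N by rewrite ltn_neqAle h1 andbT; exact: h2.
rewrite (nth_default 0 (_ : size g <= k - i)%N) ?iter0r ?mulr0 //.
lia.
Qed.

Lemma coef_rowpoly (F : finFieldType) n (c : 'rV[F]_n) (j : 'I_n) :
  (rowpoly c)`_j = c 0 j.
Proof.
rewrite /rowpoly coef_sum (bigD1 j) //= coefZ coefXn eqxx mulr1 big1 ?addr0 //.
move=> k hk; rewrite coefZ coefXn.
by case: eqP => [/val_inj h|]; [move: hk; rewrite h eqxx | rewrite mulr0].
Qed.

Lemma size_rowpoly (F : finFieldType) n (c : 'rV[F]_n) :
  (size (rowpoly c) <= n)%N.
Proof.
apply/leq_sizeP => k hk; rewrite /rowpoly coef_sum big1 // => j _.
rewrite coefZ coefXn; case: eqP => [h|]; last by rewrite mulr0.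
by have := ltn_ord j; lia.
Qed.

Lemma zmod_rearr (V : zmodType) (x y a b : V) : x + a = y + b -> x - y = b - a.
Proof.
by move=> h; rewrite -(addrK a x) h (addrC y b) addrAC addrK.
Qed.

Lemma div_exists (F : finFieldType) (theta : {rmorphism F -> F}) n b f :
  (0 < n)%N ->
  exists q, exists c : 'rV[F]_n, f = skmul theta q ('X^n - b%:P) + rowpoly c.
Proof.
move=> n0; have [m hm] : exists m, (size f < m)%N by exists (size f).+1.
elim: m f hm => // m IH f hm.
case: (leqP (size f) n) => hfn.
  exists 0, (\row_j f`_j); rewrite skmul0l add0r /rowpoly.
  rewrite {1}(poly_expand_le hfn); apply: eq_bigr => j _; by rewrite mxE.
move hs: (size f) => s; rewrite hs in hfn hm.
case: s hs hfn hm => // s hs hfn hm.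
set l := f`_s; set t := l *: 'X^(s - n).
have et : skmul theta t ('X^n - b%:P)
    = l *: 'X^s - (l * iter (s - n) theta b) *: 'X^(s - n).
  have eb : b%:P = b *: 'X^0 :> {poly F} by rewrite expr0 alg_polyC.
  have eX : 'X^n = 1 *: 'X^n :> {poly F} by rewrite scale1r.
  rewrite skmulBr {1}eX eb !skmul_mono iter1r mulr1 addn0 subnK //; lia.
have sf' : (size (f - skmul theta t ('X^n - b%:P))%R <= s)%N.
  apply/leq_sizeP => j hj; rewrite et !coefB !coefZ !coefXn.
  have -> : (j == s - n)%N = false by apply/negbTE; lia.
  rewrite mulr0 subr0; case: (eqVneq j s) => [->|hjs]; first by rewrite mulr1 subrr.
  by rewrite mulr0 subr0 nth_default // hs; lia.
have [q' [c ec]] := IH _ (leq_ltn_trans sf' (leq_trans (ltnSn s) (ltnSE hm))).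
exists (q' + t), c; rewrite skmulDl -addrAC -ec.
by rewrite subrK.
Qed.

Lemma rem_uniq (F : finFieldType) (theta : {rmorphism F -> F}) n b q1 q2
  (c1 c2 : 'rV[F]_n) : (0 < n)%N ->
  skmul theta q1 ('X^n - b%:P) + rowpoly c1
  = skmul theta q2 ('X^n - b%:P) + rowpoly c2 -> c1 = c2.
Proof.
move=> n0 /zmod_rearr; rewrite -skmulBl => e.
have P0 : 'X^n - b%:P != 0 :> {poly F}.
  by rewrite -size_poly_gt0 size_XnsubC.
have eq0 : rowpoly c2 - rowpoly c1 = 0.
  case: (eqVneq (q1 - q2) 0) => [h|h]; first by rewrite -e h skmul0l.
  have := size_skmul theta h P0; rewrite e size_XnsubC // => hs.
  have hle : (size (rowpoly c2 - rowpoly c1)%R <= n)%N.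
    apply: leq_trans (size_polyD _ _) _; rewrite size_polyN geq_max.
    by rewrite !size_rowpoly.
  have hq : (0 < size (q1 - q2)%R)%N by rewrite size_poly_gt0.
  by move: hle; rewrite hs; lia.
apply/rowP => j; apply/eqP; rewrite eq_sym -subr_eq0.
by rewrite -!coef_rowpoly -coefB eq0 coef0.
Qed.

Lemma vrepP (F : finFieldType) (theta : {rmorphism F -> F}) n b f :
  (0 < n)%N ->
  exists q, f = skmul theta q ('X^n - b%:P) + rowpoly (vrep theta n b f).
Proof.
move=> n0; rewrite /vrep.
apply: (epsilon_spec (inhabits 0) (fun c : 'rV[F]_n =>
   exists q, f = skmul theta q ('X^n - b%:P) + rowpoly c)).
by have [q [c e]] := div_exists theta b f n0; exists c, q.
Qed.

Lemma vrep_eq (F : finFieldType) (theta : {rmorphism F -> F}) n b f q c :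
  (0 < n)%N -> f = skmul theta q ('X^n - b%:P) + rowpoly c ->
  vrep theta n b f = c.
Proof.
move=> n0 e; have [q' e'] := vrepP theta b f n0.
exact: (rem_uniq n0 (etrans (esym e') e)).
Qed.

Lemma natlem x y : (0 < y)%N -> ((x + y).-1 <= y)%N -> (x <= 1)%N.
Proof. lia. Qed.

Lemma skmulXn (F : finFieldType) (theta : {rmorphism F -> F}) n g :
  skmul theta 'X^n g
  = skmul theta (\poly_(i < size g) iter n theta g`_i) 'X^n.
Proof.
rewrite poly_def {1}[g]poly_expand skmul_sumro skmul_sumlo.
apply: eq_bigr => i _.
by rewrite -(scale1r 'X^n) !skmul_mono iter1r mulr1 mul1r addnC.
Qed.

Lemma zmod_BB (V : zmodType) (x y z : V) : (x - y) - (x - z) = z - y.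
Proof. by rewrite opprB addrC addrA subrK. Qed.

Lemma key (F : finFieldType) (theta : {rmorphism F -> F}) n a g h :
  (0 < n)%N -> a != 0 -> 'X^n - a%:P = skmul theta h g ->
  skmul theta ('X^n - (gamma theta n a g)%:P) g
  = skmul theta (\poly_(i < size g) iter n theta g`_i) ('X^n - a%:P).
Proof.
move=> n0 a0 hg.
have g00 : g`_0 != 0.
  have := congr1 (fun p : {poly F} => p`_0) hg; rewrite /= skmul_coef0 coefB coefXn coefC eqxx.
  move: n0; rewrite lt0n eq_sym => /negbTE ->; rewrite sub0r.
  move=> e; apply/eqP => g0; move: e; rewrite g0 mulr0 => /eqP; rewrite oppr_eq0; exact/negP.
set c := gamma theta n a g; set G' := \poly_(i < size g) iter n theta g`_i.
set r := 'X^n - c%:P - skmul theta G' h.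
have eD : skmul theta ('X^n - c%:P) g - skmul theta G' ('X^n - a%:P)
    = skmul theta r g by rewrite /r [RHS]skmulBl hg -skmulA.
have fD : skmul theta ('X^n - c%:P) g - skmul theta G' ('X^n - a%:P)
    = skmul theta G' a%:P - c *: g.
  by rewrite skmulBl skmulBr skmulCl skmulXn -/G' zmod_BB.
have cD k : (skmul theta G' a%:P - c *: g)`_k
    = iter n theta g`_k * iter k theta a - c * g`_k.
  rewrite coefB coefZ skmulCr_coef coef_poly; case: ltnP => // hk.
  by rewrite nth_default // iter0r.
have D0 : (skmul theta r g)`_0 = 0.
  rewrite -eD fD cD /c /gamma /=.
  by rewrite [a * _ * _]mulrAC divfK // mulrC subrr.
have sD : (size (skmul theta r g) <= size g)%N.
  rewrite -eD fD; apply/leq_sizeP => k hk.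
  by rewrite cD nth_default // iter0r mul0r mulr0 subrr.
have g0' : g != 0 by apply: contraNneq g00 => ->; rewrite coef0.
have sr : (size r <= 1)%N.
  case: (eqVneq r 0) => [->|r0]; first by rewrite size_poly0.
  have gs : (0 < size g)%N by rewrite size_poly_gt0.
  move: sD; rewrite size_skmul //; apply: natlem gs.
have er := size1_polyC sr.
move: D0; rewrite er skmulCl coefZ => /eqP; rewrite mulf_eq0 (negbTE g00) orbF.
move=> /eqP r00.
by apply/eqP; rewrite -subr_eq0 eD er r00 skmulCl scale0r.
Qed.

Lemma rowpoly_comb (F : finFieldType) n (d : 'rV[F]_n) (e : 'I_n -> 'rV[F]_n) :
  rowpoly (\row_j0 \sum_(k < n) d 0 k * e k 0 j0)
  = \sum_(k < n) d 0 k *: rowpoly (e k).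
Proof.
rewrite /rowpoly; under eq_bigr => j _ do rewrite mxE scaler_suml.
rewrite exchange_big /=; apply: eq_bigr => k _.
by rewrite scaler_sumr; apply: eq_bigr => j _; rewrite scalerA.
Qed.

Theorem theorem5p3 (F : finFieldType) (theta : {rmorphism F -> F})
  (theta_aut : bijective theta) (n : nat) (a : F) (g h f : {poly F}) :
  a != 0 ->
  'X^n - a%:P = skmul theta h g ->
  circ theta n a (skmul theta f g)
  = circ theta n (gamma theta n a g) f *m circ theta n a g.
Proof.
move=> a0 hg.
case: (posnP n) => [n0|n0]; first by subst n; apply/matrixP => [[]].
apply/matrixP => i j; rewrite !mxE.
set c := gamma theta n a g.
set G' := \poly_(i < size g) iter n theta g`_i.
set d := vrep theta n c (skmul theta 'X^i f).
have [qd ed] := vrepP theta c (skmul theta 'X^i f) n0.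
pose e (k : 'I_n) := vrep theta n a (skmul theta 'X^k g).
pose qe (k : 'I_n) := epsilon (inhabits 0) (fun q =>
   skmul theta 'X^k g = skmul theta q ('X^n - a%:P) + rowpoly (e k)).
have eqe (k : 'I_n) : skmul theta 'X^k g = skmul theta (qe k) ('X^n - a%:P) + rowpoly (e k).
  exact: (epsilon_spec (inhabits 0) (fun q =>
   skmul theta 'X^k g = skmul theta q ('X^n - a%:P) + rowpoly (e k))
   (vrepP theta a (skmul theta 'X^k g) n0)).
have -> : vrep theta n a (skmul theta 'X^i (skmul theta f g))
    = \row_j0 \sum_(k < n) d 0 k * e k 0 j0.
  apply: (vrep_eq (q := skmul theta qd G' + \sum_(k < n) d 0 k *: qe k) n0).
  have h1 : skmul theta (rowpoly d) g
      = \sum_(k < n) d 0 k *: skmul theta (qe k) ('X^n - a%:P)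
        + \sum_(k < n) d 0 k *: rowpoly (e k).
    rewrite /rowpoly skmul_sumlo -big_split /=; apply: eq_bigr => k _.
    by rewrite skmulZl eqe scalerDr.
  rewrite -skmulA ed skmulDl skmulA (key n0 a0 hg) -/c -/G' -skmulA h1.
  rewrite rowpoly_comb skmulDl skmul_sumlo addrA; congr (_ + _ + _).
  by apply: eq_bigr => k _; rewrite skmulZl.
rewrite mxE; apply: eq_bigr => k _; by rewrite !mxE.
Qed.
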